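(* Let \[ \begin{array}{ccc} A & \overset{\alpha}{\to} & B\\ {\scriptstyle\beta}\downarrow & & \downarrow{\scriptstyle\gamma}\\ C & \underset{\delta}{\to} & D\end{array} \] be a pullback diagram in $\underline{\mathcal{H}}$. Suppose there exist $X\in\mathscr{C}^-$, $x_B\in\mathscr{C}(X,B)$ and $x_C\in\mathscr{C}(X,C)$ such that (i) $\gamma\circ\underline{x}_B=\delta\circ\underline{x}_C$ in $\underline{\mathscr{C}}$, and (ii) there is a distinguished triangle $X\overset{x_B}{\to}B\to U\to X[1]$ with $U\in\mathcal{U}$. Then $\alpha$ is an epimorphism in $\underline{\mathcal{H}}$.
   Context: $\mathscr{C}$ is a triangulated category with shift $[1]$; subcategories are full, additive, closed under isomorphisms and direct summands. $\mathrm{Ext}^1(X,Y)=\mathscr{C}(X,Y[1])$. $\mathcal{M}\ast\mathcal{N}$ is the full subcategory of objects $C$ admitting a distinguished triangle $M\to C\to N\to M[1]$ with $M\in\mathcal{M}$, $N\in\mathcal{N}$. A cotorsion pair $(\mathcal{U},\mathcal{V})$: $\mathrm{Ext}^1(\mathcal{U},\mathcal{V})=0$ and $\mathscr{C}=\mathcal{U}\ast\mathcal{V}[1]$. Fix a twin cotorsion pair, i.e. cotorsion pairs $(\mathcal{S},\mathcal{T}),(\mathcal{U},\mathcal{V})$ with $\mathrm{Ext}^1(\mathcal{S},\mathcal{V})=0$. Put $\mathcal{W}=\mathcal{T}\cap\mathcal{U}$, $\mathscr{C}^-=\mathcal{S}[-1]\ast\mathcal{W}$, $\mathscr{C}^+=\mathcal{W}\ast\mathcal{V}[1]$,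 $\mathcal{H}=\mathscr{C}^+\cap\mathscr{C}^-$. $\underline{\mathscr{C}}$, $\underline{\mathcal{H}}$ are the ideal quotients of $\mathscr{C}$, $\mathcal{H}$ by morphisms factoring through objects of $\mathcal{W}$ ($\underline{\mathcal{H}}$ is a full subcategory of $\underline{\mathscr{C}}$), and $\underline{f}$ is the image of $f$. *)

(* Defs.v *)
From HB Require Import structures.
From mathcomp Require Import all_boot all_order all_algebra.
Set Implicit Arguments. Unset Strict Implicit. Unset Printing Implicit Defensive.
Import GRing.Theory.
Local Open Scope ring_scope.

Record CatData := {
  Obj :> Type;
  Mor : Obj -> Obj -> zmodType;
  compm : forall X Y Z : Obj, Mor Y Z -> Mor X Y -> Mor X Z;
  idm : forall X : Obj, Mor X X
}.
Arguments Mor {c}.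
Arguments compm {c X Y Z}.
Arguments idm {c}.

Section CatDefs.
Variable C : CatData.

Definition cat_axioms : Prop :=
  (forall (X Y Z W : C) (h : Mor Z W) (g : Mor Y Z) (f : Mor X Y),
      compm h (compm g f) = compm (compm h g) f) /\
  (forall (X Y : C) (f : Mor X Y), compm (idm Y) f = f) /\
  (forall (X Y : C) (f : Mor X Y), compm f (idm X) = f) /\
  (forall (X Y Z : C) (g1 g2 : Mor Y Z) (f : Mor X Y),
      compm (g1 + g2) f = compm g1 f + compm g2 f) /\
  (forall (X Y Z : C) (g : Mor Y Z) (f1 f2 : Mor X Y),
      compm g (f1 + f2) = compm g f1 + compm g f2).

Definition is_iso (X Y : C) (f : Mor X Y) : Prop :=
  exists g : Mor Y X, compm g f = idm X /\ compm f g = idm Y.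

Definition isomorphic (X Y : C) : Prop := exists f : Mor X Y, is_iso f.

Definition is_zero_obj (Z : C) : Prop :=
  (forall (Y : C) (f g : Mor Z Y), f = g) /\ (forall (Y : C) (f g : Mor Y Z), f = g).

Definition is_biprod (X Y Z : C) (i1 : Mor X Z) (i2 : Mor Y Z)
    (p1 : Mor Z X) (p2 : Mor Z Y) : Prop :=
  [/\ compm p1 i1 = idm X, compm p2 i2 = idm Y, compm p1 i2 = 0, compm p2 i1 = 0
    & compm i1 p1 + compm i2 p2 = idm Z].

Definition additive_cat : Prop :=
  cat_axioms /\ (exists Z : C, is_zero_obj Z) /\
  (forall X Y : C, exists (Z : C) (i1 : Mor X Z) (i2 : Mor Y Z) (p1 : Mor Z X) (p2 : Mor Z Y),
      is_biprod i1 i2 p1 p2).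

Definition direct_summand (X Y : C) : Prop :=
  exists (i : Mor X Y) (p : Mor Y X), compm p i = idm X.

Definition subcat (P : C -> Prop) : Prop :=
  [/\ (forall X Y : C, isomorphic X Y -> P X -> P Y),
      (forall X Y : C, direct_summand X Y -> P Y -> P X),
      (forall Z : C, is_zero_obj Z -> P Z)
    & (forall (X Y Z : C) (i1 : Mor X Z) (i2 : Mor Y Z) (p1 : Mor Z X) (p2 : Mor Z Y),
         is_biprod i1 i2 p1 p2 -> P X -> P Y -> P Z)].

End CatDefs.

Section TriDefs.
Variable C : CatData.
Variable sh : C -> C.
Variable shm : forall X Y : C, Mor X Y -> Mor (sh X) (sh Y).
Variable dist : forall X Y Z : C, Mor X Y -> Mor Y Z -> Mor Z (sh X) -> Prop.
Arguments shm {X Y}.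
Arguments dist {X Y Z}.

Definition shift_autoequiv : Prop :=
  [/\ (forall X : C, shm (idm X) = idm (sh X)),
      (forall (X Y Z : C) (g : Mor Y Z) (f : Mor X Y), shm (compm g f) = compm (shm g) (shm f)),
      (forall (X Y : C) (f g : Mor X Y), shm (f + g) = shm f + shm g),
      (forall X Y : C, bijective (@shm X Y))
    & (forall Y : C, exists X : C, isomorphic (sh X) Y)].

Definition TR1 : Prop :=
  [/\ (forall (X Y Z X' Y' Z' : C) (f : Mor X Y) (g : Mor Y Z) (h : Mor Z (sh X))
         (f' : Mor X' Y') (g' : Mor Y' Z') (h' : Mor Z' (sh X'))
         (a : Mor X X') (b : Mor Y Y') (c : Mor Z Z'),
         is_iso a -> is_iso b -> is_iso c ->
         compm b f = compm f' a -> compm c g = compm g' b -> compm (shm a) h = compm h' c ->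
         dist f g h -> dist f' g' h'),
      (forall X Z0 : C, is_zero_obj Z0 -> dist (idm X) (0 : Mor X Z0) (0 : Mor Z0 (sh X)))
    & (forall (X Y : C) (f : Mor X Y), exists (Z : C) (g : Mor Y Z) (h : Mor Z (sh X)), dist f g h)].

Definition TR2 : Prop :=
  forall (X Y Z : C) (f : Mor X Y) (g : Mor Y Z) (h : Mor Z (sh X)),
    dist f g h <-> dist g h (- shm f).

Definition TR3 : Prop :=
  forall (X Y Z X' Y' Z' : C) (f : Mor X Y) (g : Mor Y Z) (h : Mor Z (sh X))
         (f' : Mor X' Y') (g' : Mor Y' Z') (h' : Mor Z' (sh X'))
         (a : Mor X X') (b : Mor Y Y'),
    dist f g h -> dist f' g' h' -> compm b f = compm f' a ->
    exists c : Mor Z Z', compm c g = compm g' b /\ compm (shm a) h = compm h' c.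

Definition TR4 : Prop :=
  forall (X Y Z Z' X' Y' : C) (f : Mor X Y) (g : Mor Y Z)
         (j : Mor Y Z') (k : Mor Z' (sh X))
         (l : Mor Z X') (i : Mor X' (sh Y))
         (m : Mor Z Y') (n : Mor Y' (sh X)),
    dist f j k -> dist g l i -> dist (compm g f) m n ->
    exists (p : Mor Z' Y') (q : Mor Y' X'),
      [/\ dist p q (compm (shm j) i),
          compm p j = compm m g, compm n p = k, compm q m = l
        & compm i q = compm (shm f) n].

Definition triangulated : Prop :=
  [/\ additive_cat C, shift_autoequiv, TR1, TR2 & TR3 /\ TR4].

End TriDefs.

Record TriCat := {
  tcat :> CatData;
  sh : tcat -> tcat;
  shm : forall X Y : tcat, Mor X Y -> Mor (sh X) (sh Y);
  dist : forall X Y Z : tcat, Mor X Y -> Mor Y Z -> Mor Z (sh X) -> Prop;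
  tri_ax : triangulated shm dist
}.
Arguments sh {t}.
Arguments shm {t X Y}.
Arguments dist {t X Y Z}.

Section Cotorsion.
Variable T : TriCat.

Definition Ext1_zero (M N : T -> Prop) : Prop :=
  forall X Y : T, M X -> N Y -> forall f : Mor X (sh Y), f = 0.

Definition ext_star (M N : T -> Prop) : T -> Prop :=
  fun Cc => exists (X Y : T) (f : Mor X Cc) (g : Mor Cc Y) (h : Mor Y (sh X)),
    [/\ M X, N Y & dist f g h].

Definition shift1 (N : T -> Prop) : T -> Prop :=
  fun Y => exists X : T, N X /\ isomorphic Y (sh X).
Definition shiftm1 (N : T -> Prop) : T -> Prop :=
  fun Y => exists X : T, N X /\ isomorphic (sh Y) X.

Definition cotorsion_pair (M N : T -> Prop) : Prop :=
  Ext1_zero M N /\ (forall Cc : T, ext_star M (shift1 N) Cc).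

Definition twin_cotorsion (S T' U V : T -> Prop) : Prop :=
  [/\ subcat S, subcat T', subcat U & subcat V] /\
  [/\ cotorsion_pair S T', cotorsion_pair U V & Ext1_zero S V].

Definition Wc (T' U : T -> Prop) : T -> Prop := fun X => T' X /\ U X.
Definition Cminus (S T' U : T -> Prop) : T -> Prop := ext_star (shiftm1 S) (Wc T' U).
Definition Cplus (T' U V : T -> Prop) : T -> Prop := ext_star (Wc T' U) (shift1 V).
Definition Hc (S T' U V : T -> Prop) : T -> Prop :=
  fun X => Cplus T' U V X /\ Cminus S T' U X.

(* equality in the ideal quotient by morphisms factoring through W *)
Definition eqW (W : T -> Prop) (X Y : T) (f g : Mor X Y) : Prop :=
  exists (W0 : T) (u : Mor X W0) (v : Mor W0 Y), W W0 /\ f - g = compm v u.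

(* pullback square in the full subcategory H/W of C/W *)
Definition pullback_in (H W : T -> Prop) (A B Cc D : T)
    (alpha : Mor A B) (beta : Mor A Cc) (gamma : Mor B D) (delta : Mor Cc D) : Prop :=
  [/\ H A, H B, H Cc & H D] /\
  eqW W (compm gamma alpha) (compm delta beta) /\
  (forall (E : T) (b : Mor E B) (c : Mor E Cc), H E ->
        eqW W (compm gamma b) (compm delta c) ->
        (exists e : Mor E A, eqW W (compm alpha e) b /\ eqW W (compm beta e) c) /\
        (forall e e' : Mor E A,
            eqW W (compm alpha e) b -> eqW W (compm beta e) c ->
            eqW W (compm alpha e') b -> eqW W (compm beta e') c -> eqW W e e')).

Definition epi_in (H W : T -> Prop) (A B : T) (alpha : Mor A B) : Prop :=
  forall (E : T) (f g : Mor B E), H E ->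
    eqW W (compm f alpha) (compm g alpha) -> eqW W f g.

End Cotorsion.

(* Main.v *)
Require Import Defs.
From mathcomp Require Import all_boot all_order all_algebra.
Local Open Scope ring_scope.

Module Helpers.
Set Implicit Arguments. Unset Strict Implicit. Unset Printing Implicit Defensive.
Import GRing.Theory.

Section Basics.
Variable T : TriCat.
Local Notation "g ∘ f" := (compm g f) (at level 40, left associativity).

Lemma triax : triangulated (@shm T) (@dist T). Proof. exact: tri_ax. Qed.
Lemma addax : additive_cat T. Proof. by case: triax. Qed.
Lemma catax : cat_axioms T. Proof. by case: addax. Qed.

Lemma compA (X Y Z W : T) (h : Mor Z W) (g : Mor Y Z) (f : Mor X Y) :
  h ∘ (g ∘ f) = (h ∘ g) ∘ f.
Proof. by case: catax => H _; apply: H. Qed.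
Lemma comp1m (X Y : T) (f : Mor X Y) : idm Y ∘ f = f.
Proof. by case: catax => _ [H _]; apply: H. Qed.
Lemma compm1 (X Y : T) (f : Mor X Y) : f ∘ idm X = f.
Proof. by case: catax => _ [_ [H _]]; apply: H. Qed.
Lemma compDl (X Y Z : T) (g1 g2 : Mor Y Z) (f : Mor X Y) :
  (g1 + g2) ∘ f = g1 ∘ f + g2 ∘ f.
Proof. by case: catax => _ [_ [_ [H _]]]; apply: H. Qed.
Lemma compDr (X Y Z : T) (g : Mor Y Z) (f1 f2 : Mor X Y) :
  g ∘ (f1 + f2) = g ∘ f1 + g ∘ f2.
Proof. by case: catax => _ [_ [_ [_ H]]]; apply: H. Qed.
Lemma comp0l (X Y Z : T) (f : Mor X Y) : (0 : Mor Y Z) ∘ f = 0.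
Proof.
have H : (0 : Mor Y Z) ∘ f + 0 ∘ f = 0 ∘ f + 0 by rewrite -compDl !addr0.
exact: (addrI _ H).
Qed.
Lemma comp0r (X Y Z : T) (g : Mor Y Z) : g ∘ (0 : Mor X Y) = 0.
Proof.
have H : g ∘ (0 : Mor X Y) + g ∘ 0 = g ∘ 0 + 0 by rewrite -compDr !addr0.
exact: (addrI _ H).
Qed.
Lemma compNl (X Y Z : T) (g : Mor Y Z) (f : Mor X Y) : (- g) ∘ f = - (g ∘ f).
Proof. by apply/eqP; rewrite -addr_eq0 -compDl addNr comp0l. Qed.
Lemma compNr (X Y Z : T) (g : Mor Y Z) (f : Mor X Y) : g ∘ (- f) = - (g ∘ f).
Proof. by apply/eqP; rewrite -addr_eq0 -compDr addNr comp0r. Qed.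
Lemma compBl (X Y Z : T) (g1 g2 : Mor Y Z) (f : Mor X Y) :
  (g1 - g2) ∘ f = g1 ∘ f - g2 ∘ f.
Proof. by rewrite compDl compNl. Qed.
Lemma compBr (X Y Z : T) (g : Mor Y Z) (f1 f2 : Mor X Y) :
  g ∘ (f1 - f2) = g ∘ f1 - g ∘ f2.
Proof. by rewrite compDr compNr. Qed.

Lemma shax : shift_autoequiv (@shm T). Proof. by case: triax. Qed.
Lemma shm1 (X : T) : shm (idm X) = idm (sh X).
Proof. by case: shax => H _ _ _ _; apply: H. Qed.
Lemma shmM (X Y Z : T) (g : Mor Y Z) (f : Mor X Y) : shm (g ∘ f) = shm g ∘ shm f.
Proof. by case: shax => _ H _ _ _; apply: H. Qed.
Lemma shmD (X Y : T) (f g : Mor X Y) : shm (f + g) = shm f + shm g.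
Proof. by case: shax => _ _ H _ _; apply: H. Qed.
Lemma shm_bij (X Y : T) : bijective (@shm T X Y).
Proof. by case: shax => _ _ _ H _; apply: H. Qed.
Lemma ess_surj (Y : T) : exists X : T, isomorphic (sh X) Y.
Proof. by case: shax => _ _ _ _ H; apply: H. Qed.
Lemma shm0 (X Y : T) : shm (0 : Mor X Y) = 0.
Proof.
have H : shm (0 : Mor X Y) + shm 0 = shm 0 + 0 by rewrite -shmD !addr0.
exact: (addrI _ H).
Qed.
Lemma shmN (X Y : T) (f : Mor X Y) : shm (- f) = - shm f.
Proof. by apply/eqP; rewrite -addr_eq0 -shmD addNr shm0. Qed.
Lemma shm_inj (X Y : T) : injective (@shm T X Y).
Proof. exact: bij_inj (shm_bij X Y). Qed.
Lemma shm_surj (X Y : T) (c : Mor (sh X) (sh Y)) : exists f, shm f = c.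
Proof. case: (shm_bij X Y) => g _ gK; by exists (g c); rewrite gK. Qed.

Lemma tr1 : TR1 (@shm T) (@dist T). Proof. by case: triax. Qed.
Lemma tr2 : TR2 (@shm T) (@dist T). Proof. by case: triax. Qed.
Lemma tr3 : TR3 (@shm T) (@dist T). Proof. by case: triax => _ _ _ _ []. Qed.
Lemma tr4 : TR4 (@shm T) (@dist T). Proof. by case: triax => _ _ _ _ []. Qed.

Lemma zero_ex : exists Z : T, is_zero_obj Z.
Proof. by case: addax => _ []. Qed.

Lemma zero_sh (Z : T) : is_zero_obj Z -> is_zero_obj (sh Z).
Proof.
move=> [H1 H2].
have e : idm (sh Z) = 0 by rewrite -shm1 (H1 Z (idm Z) 0) shm0.
split=> Y f g.
  by rewrite -(compm1 f) -(compm1 g) e !comp0r.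
by rewrite -(comp1m f) -(comp1m g) e !comp0l.
Qed.

Lemma is_iso_id (X : T) : is_iso (idm X).
Proof. by exists (idm X); rewrite comp1m. Qed.
Lemma is_iso_Nid (X : T) : is_iso (- idm X).
Proof. by exists (- idm X); rewrite compNl compNr opprK comp1m. Qed.

Lemma iso_zero (X Y Y2 : T) (m : Mor X Y) (r : Mor Y Y2) :
  is_iso r -> r ∘ m = 0 -> m = 0.
Proof.
move=> [r' [e1 _]] e; by rewrite -(comp1m m) -e1 -compA e comp0r.
Qed.

Lemma wcok (X Y Z Y' : T) (f : Mor X Y) (g : Mor Y Z) (h : Mor Z (sh X))
  (t : Mor Y Y') : dist f g h -> t ∘ f = 0 -> exists k : Mor Z Y', t = k ∘ g.
Proof.
move=> D tf.
case: zero_ex => Z0 z0.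
have D2 : dist (0 : Mor Z0 Y') (idm Y') (0 : Mor Y' (sh Z0)).
  apply/tr2; rewrite shm0 oppr0.
  by case: tr1 => _ H _; apply: H; apply: zero_sh.
have E : t ∘ f = (0 : Mor Z0 Y') ∘ (0 : Mor X Z0) by rewrite tf comp0l.
have [c [e1 _]] := tr3 D D2 E.
by exists c; rewrite e1 comp1m.
Qed.

Lemma wker (X Y Z W' : T) (f : Mor X Y) (g : Mor Y Z) (h : Mor Z (sh X))
  (t : Mor W' Y) : dist f g h -> g ∘ t = 0 -> exists s : Mor W' X, t = f ∘ s.
Proof.
move=> D gt.
case: zero_ex => Z0 z0.
have D1 : dist (0 : Mor W' Z0) (0 : Mor Z0 (sh W')) (- shm (idm W')).
  by apply: (tr2 _ _ _).1; case: tr1 => _ H _; apply: H.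
have D2 := (tr2 f g h).1 D.
have E : (0 : Mor Z0 Z) ∘ (0 : Mor W' Z0) = g ∘ t by rewrite gt comp0l.
have [c [_ e2]] := tr3 D1 D2 E.
move: e2; rewrite shm1 compNr compm1 compNl => /oppr_inj e2.
have [s es] := shm_surj c.
by exists s; apply: shm_inj; rewrite shmM es.
Qed.

End Basics.

Section Desus.
Variable T : TriCat.
Local Notation "g ∘ f" := (compm g f) (at level 40, left associativity).

Lemma desus (A1 C1 Y Q T1 : T) (F : Mor A1 (sh Y)) (G : Mor (sh Y) C1)
  (H : Mor C1 (sh A1)) (th : Mor (sh Q) A1) (rh : Mor C1 (sh T1)) :
  is_iso th -> is_iso rh -> dist F G H ->
  exists (a : Mor Q Y) (b : Mor Y T1) (c : Mor T1 (sh Q)),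
    [/\ dist a b c, shm a = F ∘ th & shm b = rh ∘ G].
Proof.
move=> [th' [tt' t't]] [rh' [rr' r'r]] D.
have [a ea] := shm_surj (F ∘ th).
have [b eb] := shm_surj (rh ∘ G).
have [c ec] := shm_surj (- (shm th' ∘ H ∘ rh')).
case: (tr1 T) => Hiso _ _.
have D1 : dist (shm a) (shm b) (shm th' ∘ H ∘ rh').
  apply: (Hiso _ _ _ _ _ _ _ _ _ _ _ _ th' (idm _) rh _ _ _ _ _ _ D).
  - by exists th.
  - exact: is_iso_id.
  - by exists rh'.
  - by rewrite ea -compA t't compm1 comp1m.
  - by rewrite eb compm1.
  - by rewrite -compA rr' compm1.
have D2 : dist (- shm a) (- shm b) (shm th' ∘ H ∘ rh').
  apply: (Hiso _ _ _ _ _ _ _ _ _ _ _ _ (idm _) (- idm _) (idm _) _ _ _ _ _ _ D1).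
  - exact: is_iso_id.
  - exact: is_iso_Nid.
  - exact: is_iso_id.
  - by rewrite compNl comp1m compm1.
  - by rewrite compNr compNl compm1 opprK comp1m.
  - by rewrite shm1 comp1m compm1.
exists a, b, c; split=> //.
apply/tr2; apply/tr2; apply/tr2.
by rewrite ec opprK.
Qed.

End Desus.

Section Twin.
Variable T : TriCat.
Variables S T' U V : T -> Prop.
Hypothesis twin : twin_cotorsion S T' U V.
Local Notation "g ∘ f" := (compm g f) (at level 40, left associativity).

Lemma sS : subcat S. Proof. by case: twin => [[]]. Qed.
Lemma sT : subcat T'. Proof. by case: twin => [[]]. Qed.
Lemma sU : subcat U. Proof. by case: twin => [[]]. Qed.
Lemma eST : Ext1_zero S T'. Proof. by case: twin => _ [[]]. Qed.
Lemma cST : forall Cc : T, ext_star S (shift1 T') Cc. Proof. by case: twin => _ [[]]. Qed.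
Lemma eUV : Ext1_zero U V. Proof. by case: twin => _ [_ []]. Qed.
Lemma cUV : forall Cc : T, ext_star U (shift1 V) Cc. Proof. by case: twin => _ [_ []]. Qed.
Lemma eSV : Ext1_zero S V. Proof. by case: twin => _ []. Qed.

Lemma homUV1 (X Y : T) (m : Mor X Y) : U X -> shift1 V Y -> m = 0.
Proof.
move=> uX [V' [vV [r ir]]].
by apply: (iso_zero ir); apply: eUV.
Qed.

Lemma homSV1 (X Y : T) (m : Mor X Y) : S X -> shift1 V Y -> m = 0.
Proof.
move=> uX [V' [vV [r ir]]].
by apply: (iso_zero ir); apply: eSV.
Qed.

Lemma homSmT (P Y : T) (m : Mor P Y) : shiftm1 S P -> T' Y -> m = 0.
Proof.
move=> [S0 [sS0 [th [th' [e1 e2]]]]] tY.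
apply: shm_inj; rewrite shm0.
have : shm m ∘ th' = 0 by apply: eST.
by move=> H; rewrite -(compm1 (shm m)) -e1 compA H comp0l.
Qed.

Lemma homshS_V1 (P Y : T) (l : Mor (sh P) Y) : shiftm1 S P -> shift1 V Y -> l = 0.
Proof.
move=> [S0 [sS0 [th [th' [e1 e2]]]]] vY.
have : l ∘ th' = 0 by apply: homSV1.
by move=> H; rewrite -(compm1 l) -e1 compA H comp0l.
Qed.

Lemma shift1_sh (V' : T) : V V' -> shift1 V (sh V').
Proof. by move=> vV; exists V'; split=> //; exists (idm _); apply: is_iso_id. Qed.

Lemma charU (X : T) :
  (forall (V' : T) (phi : Mor X (sh V')), V V' -> phi = 0) -> U X.
Proof.
move=> H.
have [X0 [Y0 [f [g [h [uX0 [V' [vV [r ir]]] D]]]]]] := cUV X.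
have g0 : g = 0 by apply: (iso_zero ir); apply: H.
have E : g ∘ idm X = 0 by rewrite g0 comp0l.
have [s es] := wker D E.
case: sU => _ Hs _ _.
apply: (Hs X X0) => //.
by exists s, f.
Qed.

Lemma ST_minus (Y : T) : exists (Q Tm : T) (a : Mor Q Y) (b : Mor Y Tm) (c : Mor Tm (sh Q)),
  [/\ shiftm1 S Q, T' Tm & dist a b c].
Proof.
have [X0 [Y0 [f [g [h [sX0 [T1 [tT1 [r ir]]] D]]]]]] := cST (sh Y).
have [Q [th ith]] := ess_surj X0.
have [a [b [c [D' _ _]]]] := desus ith ir D.
exists Q, T1, a, b, c; split=> //.
by exists X0; split=> //; exists th.
Qed.

Definition factW (X Y : T) (t : Mor X Y) : Prop :=
  exists (W0 : T) (u : Mor X W0) (v : Mor W0 Y), Wc T' U W0 /\ t = v ∘ u.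

Lemma factW0 (X Y : T) : factW (0 : Mor X Y).
Proof.
case: (zero_ex T) => Z [z1 z2].
exists Z, (0 : Mor X Z), (0 : Mor Z Y); split; last by rewrite comp0l.
split.
  by case: sT => _ _ H _; apply: H.
by case: sU => _ _ H _; apply: H.
Qed.

Lemma factW_add (X Y : T) (t1 t2 : Mor X Y) : factW t1 -> factW t2 -> factW (t1 + t2).
Proof.
move=> [W1 [u1 [v1 [[wT1 wU1] ->]]]] [W2 [u2 [v2 [[wT2 wU2] ->]]]].
case: (addax T) => _ [_ Hb].
have [Z [i1 [i2 [p1 [p2 bp]]]]] := Hb W1 W2.
have bp' := bp; case: bp' => e11 e22 e12 e21 _.
exists Z, (i1 ∘ u1 + i2 ∘ u2), (v1 ∘ p1 + v2 ∘ p2); split.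
  split; first by case: sT => _ _ _ H; apply: (H _ _ _ _ _ _ _ bp).
  by case: sU => _ _ _ H; apply: (H _ _ _ _ _ _ _ bp).
rewrite compDr !compDl !compA -!(compA v1) -!(compA v2) e11 e22 e12 e21.
by rewrite !comp0l !comp0r !comp1m addr0 add0r.
Qed.

Lemma factWl (X Y Z : T) (s : Mor Y Z) (t : Mor X Y) : factW t -> factW (s ∘ t).
Proof.
move=> [W1 [u1 [v1 [w ->]]]]; exists W1, u1, (s ∘ v1); split=> //.
by rewrite compA.
Qed.

Lemma factWr (X Y Z : T) (s : Mor Y Z) (t : Mor X Y) : factW s -> factW (s ∘ t).
Proof.
move=> [W1 [u1 [v1 [w ->]]]]; exists W1, (u1 ∘ t), v1; split=> //.
by rewrite compA.
Qed.

Lemma factWN (X Y : T) (t : Mor X Y) : factW t -> factW (- t).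
Proof.
move=> [W1 [u1 [v1 [w ->]]]]; exists W1, (- u1), v1; split=> //.
by rewrite compNr.
Qed.

Lemma eqW_factW (X Y : T) (f g : Mor X Y) : eqW (Wc T' U) f g <-> factW (f - g).
Proof. by []. Qed.

End Twin.

Section Refl.
Variable T : TriCat.
Variables S T' U V : T -> Prop.
Hypothesis twin : twin_cotorsion S T' U V.
Local Notation "g ∘ f" := (compm g f) (at level 40, left associativity).

Lemma reflect (X : T) (hX : Cminus S T' U X) : exists (Z : T) (eta : Mor X Z),
  [/\ Hc S T' U V Z,
   (forall (Y : T) (g : Mor X Y), Cplus T' U V Y -> exists g' : Mor Z Y, g = g' ∘ eta)
  & (forall (Y : T) (t : Mor Z Y), Cplus T' U V Y ->
       factW T' U (t ∘ eta) -> factW T' U t)].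
Proof.
have [UX [YX [uX [vX [hX' [uUX vYX DX]]]]]] := cUV twin X.
have [P2 [T2 [a [b [c [sP2 tT2 Dab]]]]]] := ST_minus twin UX.
have uT2 : U T2.
  apply: (charU twin) => V' phi vV.
  have E : phi ∘ b = 0 by apply: (eUV twin).
  have [k ek] := wcok ((tr2 _ _ _).1 Dab) E.
  by rewrite ek (homshS_V1 twin k sP2 (shift1_sh vV)) comp0l.
case: (tr1 T) => _ _ Hex.
have [Z [eta [zeta Dz]]] := Hex _ _ (uX ∘ a).
have Dz' := (tr2 _ _ _).1 Dz.
have kill : forall (Y : T) (g : Mor X Y), Cplus T' U V Y -> g ∘ (uX ∘ a) = 0.
  move=> Y g [W2 [Y2 [p2 [q2 [r2 [[wT wU] vY2 D2]]]]]].
  have E : q2 ∘ (g ∘ uX) = 0 by apply: (homUV1 twin).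
  have [m em] := wker D2 E.
  have ma : m ∘ a = 0 by apply: (homSmT twin).
  by rewrite compA em -compA ma comp0r.
exists Z, eta; split.
- split.
    have [p [q [Dpq _ _ _ _]]] := tr4 Dab DX Dz.
    by exists T2, YX, p, q, (shm b ∘ hX').
  have [Q [Tm [a' [b' [c' [sQ tTm Dq]]]]]] := ST_minus twin Z.
  exists Q, Tm, a', b', c'; split=> //; split=> //.
  apply: (charU twin) => V' phi vV.
  case: hX => [S' [W1 [s [w [r [sS' [wT1 wU1] Ds]]]]]].
  have E1 : (b' ∘ eta) ∘ s = 0 by apply: (homSmT twin).
  have [k ek] := wcok Ds E1.
  have E2 : (phi ∘ b') ∘ eta = 0.
    by rewrite -compA ek compA (eUV twin wU1 vV (phi ∘ k)) comp0l.
  have [l el] := wcok Dz' E2.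
  have E3 : phi ∘ b' = 0.
    by rewrite el (homshS_V1 twin l sP2 (shift1_sh vV)) comp0l.
  have [l' el'] := wcok ((tr2 _ _ _).1 Dq) E3.
  by rewrite el' (homshS_V1 twin l' sQ (shift1_sh vV)) comp0l.
- move=> Y g cY.
  by have [k ek] := wcok Dz (kill Y g cY); exists k.
- move=> Y t cY [W0 [u0 [v0 [[wT0 wU0] e0]]]].
  have E1 : u0 ∘ (uX ∘ a) = 0 by apply: (homSmT twin).
  have [m0 em0] := wcok Dz E1.
  have E2 : (t - v0 ∘ m0) ∘ eta = 0.
    by rewrite compBl e0 em0 -compA subrr.
  have [k ek] := wcok Dz' E2.
  case: cY => [W2 [Y2 [p2 [q2 [r2 [[wT wU] vY2 D2]]]]]].
  have E3 : q2 ∘ k = 0 by apply: (homshS_V1 twin).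
  have [k' ek'] := wker D2 E3.
  have -> : t = v0 ∘ m0 + p2 ∘ (k' ∘ zeta).
    by rewrite compA -ek' -ek addrC subrK.
  apply: (factW_add twin).
    by exists W0, m0, v0.
  by exists W2, (k' ∘ zeta), p2.
Qed.

End Refl.
End Helpers.
Import Helpers. Import GRing.Theory.

Theorem lemma5p3 (T : TriCat) (S T' U V : T -> Prop)
  (twin : twin_cotorsion S T' U V)
  (A B C D : T) (alpha : Mor A B) (beta : Mor A C) (gamma : Mor B D) (delta : Mor C D)
  (pb : pullback_in (Hc S T' U V) (Wc T' U) alpha beta gamma delta)
  (X : T) (hX : Cminus S T' U X) (xB : Mor X B) (xC : Mor X C)
  (h1 : eqW (Wc T' U) (compm gamma xB) (compm delta xC))
  (h2 : exists (U0 : T) (g : Mor B U0) (h : Mor U0 (sh X)), U U0 /\ dist xB g h) :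
  epi_in (Hc S T' U V) (Wc T' U) alpha.
Proof.
move=> E f g [cE _] Hfg.
case: pb => [[[cA _] [cB _] [cC _] [cD _]] [_ Hpb]].
case: cE => [W2 [Y2 [p2 [q2 [r2 [[wT wU] vY2 D2]]]]]].
have psia : compm (compm q2 (f - g)) alpha = 0.
  case: Hfg => [W0 [u [v [[_ wU0] ev]]]].
  rewrite -compA compBl ev compA (homUV1 twin (compm q2 v) wU0 vY2).
  by rewrite comp0l.
have [Z [eta [hZ Hext Hinj]]] := reflect twin hX.
have [b eb] := Hext B xB cB.
have [c ec] := Hext C xC cC.
have Hgd : factW T' U (compm gamma b - compm delta c).
  apply: Hinj => //.
  by rewrite compBl -!compA -eb -ec.
have [[e [ea _]] _] := Hpb Z b c hZ Hgd.
case: ea => [W1 [u1 [v1 [[_ wU1] ev1]]]].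
have psib : compm (compm q2 (f - g)) b = 0.
  have -> : b = compm alpha e - compm v1 u1 by rewrite -ev1 opprB addrC subrK.
  rewrite compBr compA psia comp0l sub0r compA.
  by rewrite (homUV1 twin (compm (compm q2 (f - g)) v1) wU1 vY2) comp0l oppr0.
have psix : compm (compm q2 (f - g)) xB = 0 by rewrite eb compA psib comp0l.
case: h2 => [U0 [gB [hB [uU0 DB]]]].
have [k ek] := wcok DB psix.
have psi0 : compm q2 (f - g) = 0 by rewrite ek (homUV1 twin k uU0 vY2) comp0l.
have [s es] := wker D2 psi0.
by exists W2, s, p2.
Qed.
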